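(* For every integer $t\ge 2$, the set $S_t$ is in general position, i.e., no three of its points are collinear.
   Context: For integers $r\ge 1$ let $\delta_r:=3\cdot 4^{r-1}$ and $\delta_r':=(3r+1)\cdot 4^{r-1}$. For positive integers $k,l$ define $S_{k,l}\subset\mathbb{Z}^2$ recursively: $S_{k,l}:=\{(0,0)\}$ if $k\le 2$ or $l\le 2$; otherwise $S_{k,l}:=S_{k-1,l}\cup\{(x+\delta_{k+l-1},\,y+\delta_{k+l-1}'):(x,y)\in S_{k,l-1}\}$. Let $t\ge 2$ be an integer. For $0\le i\le t-3$ define $v_i:=(3(t-i),-3i)$, and let $w_0:=(0,0)$, $w_{i+1}:=w_i+v_i$ for $i=0,\dots,t-3$. For $i=0,\dots,t-2$ let $q_i:=(t+1)4^{t+1}w_i$. Define $S_t:=\bigcup_{i=0}^{t-2}\{p+q_i: p\in S_{t-i,i+2}\}$. *)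

(* Defs.v *)
From Stdlib Require Import ZArith List Lia.
Import ListNotations.
Open Scope Z_scope.

Definition pt := (Z * Z)%type.

Definition delta (r : nat) : Z := 3 * 4 ^ (Z.of_nat r - 1).
Definition delta' (r : nat) : Z := (3 * Z.of_nat r + 1) * 4 ^ (Z.of_nat r - 1).

Definition padd (p q : pt) : pt := (fst p + fst q, snd p + snd q).

(* S_{k,l} as a list of points (k, l positive; for k = 0 or l = 0 we
   also return {(0,0)}, matching the base case "k <= 2 or l <= 2"). *)
Fixpoint Skl (k : nat) : nat -> list pt :=
  match k with
  | O => fun _ => [(0, 0)]
  | S k' => fix g (l : nat) : list pt :=
      match l with
      | O => [(0, 0)]
      | S l' =>
          if (Nat.leb k 2 || Nat.leb l 2)%bool then [(0, 0)]
          else Skl k' l ++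
               map (fun p => padd p (delta (k + l - 1), delta' (k + l - 1))) (g l')
      end
  end.

Definition inS (k l : nat) (p : pt) : Prop := In p (Skl k l).

Definition v (t i : nat) : pt := (3 * (Z.of_nat t - Z.of_nat i), - 3 * Z.of_nat i).
Fixpoint w (t i : nat) : pt :=
  match i with
  | O => (0, 0)
  | S i' => padd (w t i') (v t i')
  end.
Definition q (t i : nat) : pt :=
  ((Z.of_nat t + 1) * 4 ^ (Z.of_nat t + 1) * fst (w t i),
   (Z.of_nat t + 1) * 4 ^ (Z.of_nat t + 1) * snd (w t i)).

Definition St (t : nat) (x : pt) : Prop :=
  exists i : nat, (i <= t - 2)%nat /\
    exists p : pt, inS (t - i) (i + 2) p /\ x = padd p (q t i).

Definition collinear (a b c : pt) : Prop :=
  (fst b - fst a) * (snd c - snd a) - (snd b - snd a) * (fst c - fst a) = 0.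

Definition general_position (X : pt -> Prop) : Prop :=
  forall a b c : pt, X a -> X b -> X c ->
    a <> b -> a <> c -> b <> c -> ~ collinear a b c.

Example ex1 : length (Skl 3 3) = 2%nat. Proof. reflexivity. Qed.
Example ex2 : length (Skl 4 4) = 6%nat. Proof. reflexivity. Qed.

(* Main.v *)
Require Import Defs.
From Stdlib Require Import ZArith List Lia.
Import ListNotations.
Open Scope Z_scope.

Lemma Skl_unfold k l : Skl (S k) (S l) =
  if (Nat.leb (S k) 2 || Nat.leb (S l) 2)%bool then [(0, 0)]
  else Skl k (S l) ++ map (fun p => padd p (delta (S k + S l - 1), delta' (S k + S l - 1))) (Skl (S k) l).
Proof. reflexivity. Qed.

Definition e (r : nat) : pt := (delta r, delta' r).

Inductive Sub : nat -> pt -> Prop :=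
| Sub0 : Sub 0 (0,0)
| SubL n p : Sub n p -> Sub (S n) p
| SubH n p : Sub n p -> Sub (S n) (padd p (e (S n))).

Inductive Sig : nat -> pt -> Prop :=
| Sig0 : Sig 0 (0,0)
| SigS n a x y : -1 <= a <= 1 -> Sig n (x,y) ->
    Sig (S n) (x + a * delta (S n), y + a * delta' (S n)).

Lemma delta_S n : delta (S n) = 3 * 4 ^ Z.of_nat n.
Proof. unfold delta. f_equal. f_equal. lia. Qed.
Lemma delta'_S n : delta' (S n) = (3 * Z.of_nat n + 4) * 4 ^ Z.of_nat n.
Proof. unfold delta'. rewrite Nat2Z.inj_succ. replace (Z.succ (Z.of_nat n) - 1) with (Z.of_nat n) by lia. ring. Qed.
Lemma pow4_S n : 4 ^ Z.of_nat (S n) = 4 * 4 ^ Z.of_nat n.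
Proof. rewrite Nat2Z.inj_succ, Z.pow_succ_r by lia. ring. Qed.
Lemma pow4_pos n : 0 < 4 ^ Z.of_nat n.
Proof. apply Z.pow_pos_nonneg; lia. Qed.

Lemma Sub_0 n : Sub n (0,0).
Proof. induction n; [constructor | now constructor]. Qed.

Lemma Skl_Sub k : forall l p, In p (Skl k l) -> Sub (k + l - 1) p.
Proof.
  induction k as [|k IHk].
  - intros l p H. simpl in H. destruct H as [<-|[]]. apply Sub_0.
  - induction l as [|l IHl]; intros p H.
    + simpl in H. destruct H as [<-|[]]. apply Sub_0.
    + rewrite Skl_unfold in H.
      destruct (_ || _)%bool.
      * destruct H as [<-|[]]. apply Sub_0.
      * apply in_app_or in H. destruct H as [H|H].
        -- apply IHk in H. replace (S k + S l - 1)%nat with (S (k + S l - 1)) by lia.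
           now constructor.
        -- apply in_map_iff in H. destruct H as [p' [<- Hp']].
           apply IHl in Hp'.
           replace (S k + S l - 1)%nat with (S (S k + l - 1)) by lia.
           apply (SubH _ _ Hp').
Qed.

Lemma Sub_bounds n p : Sub n p ->
  0 <= fst p <= 4 ^ Z.of_nat n - 1 /\ 0 <= snd p <= Z.of_nat n * 4 ^ Z.of_nat n.
Proof.
  induction 1.
  - simpl. lia.
  - rewrite pow4_S, Nat2Z.inj_succ. pose proof (pow4_pos n). nia.
  - destruct p as [x y]. unfold padd, e; cbn [fst snd] in *.
    rewrite delta_S, delta'_S, pow4_S, Nat2Z.inj_succ. pose proof (pow4_pos n). nia.
Qed.

Lemma Sig_neg n x y : Sig n (x,y) -> Sig n (-x,-y).
Proof.
  remember (x,y) as p eqn:E. intros H. revert x y E. induction H; intros x' y' E.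
  - inversion E; subst. simpl. constructor.
  - inversion E; subst.
    replace (- (x + a * delta (S n))) with (-x + (-a) * delta (S n)) by ring.
    replace (- (y + a * delta' (S n))) with (-y + (-a) * delta' (S n)) by ring.
    constructor; [lia| now apply IHSig].
Qed.

Lemma Sig_bounds n x y : Sig n (x,y) ->
  let k := Z.of_nat n in let K := 4 ^ k in
  Z.abs x <= K - 1 /\ (k+1)*x - y <= K - (k+1) /\ y - (k+2)*x <= 2*K - (k+2).
Proof.
  remember (x,y) as p eqn:E. intros H. revert x y E. induction H; intros x' y' E.
  - inversion E; subst. simpl. lia.
  - inversion E; subst. cbv zeta.
    destruct (IHSig x y eq_refl) as (H1 & H2 & H3).
    rewrite delta_S, delta'_S, pow4_S, Nat2Z.inj_succ.
    pose proof (pow4_pos n).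
    set (K := 4 ^ Z.of_nat n) in *. set (k := Z.of_nat n) in *.
    assert (Ha : a = -1 \/ a = 0 \/ a = 1) by lia.
    destruct Ha as [Ha|[Ha|Ha]]; subst a; lia.
Qed.

Definition slope_in (m : Z) (x y : Z) : Prop :=
  (0 < x /\ m*x < y /\ y < (m+1)*x) \/ (x < 0 /\ (m+1)*x < y /\ y < m*x).

Lemma slope_neg m x y : slope_in m x y -> slope_in m (-x) (-y).
Proof. unfold slope_in. lia. Qed.

Lemma slope_top n x y : Sig n (x,y) ->
  slope_in (Z.of_nat n + 1) (x + 3 * 4 ^ Z.of_nat n) (y + (3 * Z.of_nat n + 4) * 4 ^ Z.of_nat n).
Proof.
  intros H. pose proof (Sig_bounds _ _ _ H) as (H1&H2&H3). cbv zeta in *.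
  pose proof (pow4_pos n).
  set (K := 4 ^ Z.of_nat n) in *. set (k := Z.of_nat n) in *.
  left. lia.
Qed.

Lemma Sig_slope n x y : Sig n (x,y) ->
  (x = 0 /\ y = 0) \/ exists m, 1 <= m <= Z.of_nat n /\ slope_in m x y.
Proof.
  remember (x,y) as p eqn:E. intros H. revert x y E. induction H; intros x' y' E.
  - inversion E; subst. left; lia.
  - inversion E; subst. clear E.
    rewrite delta_S, delta'_S.
    assert (Ha : a = -1 \/ a = 0 \/ a = 1) by lia.
    destruct Ha as [Ha|[Ha|Ha]]; subst a.
    + right. exists (Z.of_nat n + 1). split; [lia|].
      apply Sig_neg in H0. apply slope_top in H0. apply slope_neg in H0.
      replace (x + -1 * (3 * 4 ^ Z.of_nat n)) with (- (- x + 3 * 4 ^ Z.of_nat n)) by ring.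
      replace (y + -1 * ((3 * Z.of_nat n + 4) * 4 ^ Z.of_nat n)) with
        (- (- y + (3 * Z.of_nat n + 4) * 4 ^ Z.of_nat n)) by ring.
      exact H0.
    + destruct (IHSig x y eq_refl) as [Hz|[m [Hm Hs]]].
      * left. lia.
      * right. exists m. split; [lia|]. replace (x + 0 * (3 * 4 ^ Z.of_nat n)) with x by ring.
        replace (y + 0 * ((3 * Z.of_nat n + 4) * 4 ^ Z.of_nat n)) with y by ring. exact Hs.
    + right. exists (Z.of_nat n + 1). split; [lia|].
      apply slope_top in H0.
      replace (x + 1 * (3 * 4 ^ Z.of_nat n)) with (x + 3 * 4 ^ Z.of_nat n) by ring.
      replace (y + 1 * ((3 * Z.of_nat n + 4) * 4 ^ Z.of_nat n)) with
        (y + (3 * Z.of_nat n + 4) * 4 ^ Z.of_nat n) by ring.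
      exact H0.
Qed.

Lemma slope_cross m m' dx dy ex ey : slope_in m dx dy -> slope_in m' ex ey -> m < m' ->
  dx * ey - dy * ex <> 0.
Proof.
  unfold slope_in. intros [(H1&H2&H3)|(H1&H2&H3)] [(G1&G2&G3)|(G1&G2&G3)] Hm.
  - assert (dy < m' * dx) by nia. nia.
  - assert (dy < m' * dx) by nia. nia.
  - assert (dy > m' * dx) by nia. nia.
  - assert (dy > m' * dx) by nia. nia.
Qed.

Lemma Sub_diff n p p' : Sub n p -> Sub n p' -> Sig n (fst p' - fst p, snd p' - snd p).
Proof.
  intros H. revert p'. induction H; intros p' H'.
  - inversion H'; subst. simpl. constructor.
  - inversion H'; subst.
    + pose proof (IHSub _ H1) as G.
      replace (fst p' - fst p) with (fst p' - fst p + 0 * delta (S n)) by ring.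
      replace (snd p' - snd p) with (snd p' - snd p + 0 * delta' (S n)) by ring.
      constructor; [lia|exact G].
    + pose proof (IHSub _ H1) as G. destruct p0 as [x y]. unfold padd, e; cbn [fst snd] in *.
      replace (x + delta (S n) - fst p) with (x - fst p + 1 * delta (S n)) by ring.
      replace (y + delta' (S n) - snd p) with (y - snd p + 1 * delta' (S n)) by ring.
      constructor; [lia|exact G].
  - inversion H'; subst.
    + pose proof (IHSub _ H1) as G. destruct p as [x y]. unfold padd, e; cbn [fst snd] in *.
      replace (fst p' - (x + delta (S n))) with (fst p' - x + -1 * delta (S n)) by ring.
      replace (snd p' - (y + delta' (S n))) with (snd p' - y + -1 * delta' (S n)) by ring.
      constructor; [lia|exact G].
    + pose proof (IHSub _ H1) as G. destruct p as [x y]; destruct p0 as [x' y'].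
      unfold padd, e; cbn [fst snd] in *.
      replace (x' + delta (S n) - (x + delta (S n))) with (x' - x + 0 * delta (S n)) by ring.
      replace (y' + delta' (S n) - (y + delta' (S n))) with (y' - y + 0 * delta' (S n)) by ring.
      constructor; [lia|exact G].
Qed.

Lemma col_12 a b c : collinear a b c -> collinear b a c.
Proof. unfold collinear. lia. Qed.
Lemma col_23 a b c : collinear a b c -> collinear a c b.
Proof. unfold collinear. lia. Qed.
Lemma col_trans a b c d : collinear (padd a d) (padd b d) (padd c d) -> collinear a b c.
Proof. unfold collinear, padd; cbn [fst snd]. lia. Qed.

Lemma MK m m' X Y Z : slope_in m (fst Y - fst X) (snd Y - snd X) ->
  slope_in m' (fst Z - fst X) (snd Z - snd X) -> m < m' -> ~ collinear X Y Z.
Proof. unfold collinear. intros H1 H2 H3 H4. exact (slope_cross _ _ _ _ _ _ H1 H2 H3 H4). Qed.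

Lemma F1 n x y : Sub n x -> Sub n y -> x <> y ->
  exists m, 1 <= m <= Z.of_nat n /\ slope_in m (fst y - fst x) (snd y - snd x).
Proof.
  intros Hx Hy Hne. pose proof (Sub_diff _ _ _ Hx Hy) as G.
  apply Sig_slope in G. destruct G as [[G1 G2]|G]; [|exact G].
  exfalso. apply Hne. destruct x, y; cbn in *. f_equal; lia.
Qed.

Lemma F2 n x z : Sub n x -> Sub n z ->
  slope_in (Z.of_nat (S n)) (fst (padd z (e (S n))) - fst x) (snd (padd z (e (S n))) - snd x).
Proof.
  intros Hx Hz. pose proof (Sub_diff _ _ _ Hx Hz) as G. apply slope_top in G.
  rewrite Nat2Z.inj_succ. unfold padd, e; cbn [fst snd]. rewrite delta_S, delta'_S.
  replace (Z.succ (Z.of_nat n)) with (Z.of_nat n + 1) by lia.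
  replace (fst z + 3 * 4 ^ Z.of_nat n - fst x) with (fst z - fst x + 3 * 4 ^ Z.of_nat n) by ring.
  replace (snd z + (3 * Z.of_nat n + 4) * 4 ^ Z.of_nat n - snd x) with
    (snd z - snd x + (3 * Z.of_nat n + 4) * 4 ^ Z.of_nat n) by ring.
  exact G.
Qed.

Lemma F3 n x z : Sub n x -> Sub n z ->
  slope_in (Z.of_nat (S n)) (fst z - fst (padd x (e (S n)))) (snd z - snd (padd x (e (S n)))).
Proof.
  intros Hx Hz. pose proof (F2 _ _ _ Hz Hx) as G. apply slope_neg in G.
  replace (fst z - fst (padd x (e (S n)))) with (- (fst (padd x (e (S n))) - fst z)) by ring.
  replace (snd z - snd (padd x (e (S n)))) with (- (snd (padd x (e (S n))) - snd z)) by ring.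
  exact G.
Qed.

Lemma F1H n x y : Sub n x -> Sub n y -> padd x (e (S n)) <> padd y (e (S n)) ->
  exists m, 1 <= m <= Z.of_nat n /\ slope_in m (fst (padd y (e (S n))) - fst (padd x (e (S n))))
     (snd (padd y (e (S n))) - snd (padd x (e (S n)))).
Proof.
  intros Hx Hy Hne. destruct (F1 n x y Hx Hy) as [m [Hm Hs]].
  { intros ->. now apply Hne. }
  exists m. split; [exact Hm|]. unfold padd; cbn [fst snd].
  replace (fst y + fst (e (S n)) - (fst x + fst (e (S n)))) with (fst y - fst x) by ring.
  replace (snd y + snd (e (S n)) - (snd x + snd (e (S n)))) with (snd y - snd x) by ring.
  exact Hs.
Qed.

Lemma Sub_gp n : forall a b c, Sub n a -> Sub n b -> Sub n c ->
  a <> b -> a <> c -> b <> c -> ~ collinear a b c.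
Proof.
  induction n as [|n IH]; intros a b c Ha Hb Hc Hab Hac Hbc Hcol.
  - inversion Ha; inversion Hb; subst. now apply Hab.
  - assert (Hlt : forall m, 1 <= m <= Z.of_nat n -> m < Z.of_nat (S n)) by (intros; lia).
    inversion Ha as [|? a0 Ha0|? a0 Ha0]; subst;
    inversion Hb as [|? b0 Hb0|? b0 Hb0]; subst;
    inversion Hc as [|? c0 Hc0|? c0 Hc0]; subst.
    + exact (IH _ _ _ Ha0 Hb0 Hc0 Hab Hac Hbc Hcol).
    + destruct (F1 _ _ _ Ha0 Hb0 Hab) as [m [Hm Hs]].
      exact (MK _ _ _ _ _ Hs (F2 _ _ _ Ha0 Hc0) (Hlt _ Hm) Hcol).
    + destruct (F1 _ _ _ Ha0 Hc0 Hac) as [m [Hm Hs]].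
      exact (MK _ _ _ _ _ Hs (F2 _ _ _ Ha0 Hb0) (Hlt _ Hm) (col_23 _ _ _ Hcol)).
    + destruct (F1H _ _ _ Hb0 Hc0 Hbc) as [m [Hm Hs]].
      exact (MK _ _ _ _ _ Hs (F3 _ _ _ Hb0 Ha0) (Hlt _ Hm) (col_23 _ _ _ (col_12 _ _ _ Hcol))).
    + destruct (F1 _ _ _ Hb0 Hc0 Hbc) as [m [Hm Hs]].
      exact (MK _ _ _ _ _ Hs (F2 _ _ _ Hb0 Ha0) (Hlt _ Hm) (col_23 _ _ _ (col_12 _ _ _ Hcol))).
    + destruct (F1H _ _ _ Ha0 Hc0 Hac) as [m [Hm Hs]].
      exact (MK _ _ _ _ _ Hs (F3 _ _ _ Ha0 Hb0) (Hlt _ Hm) (col_23 _ _ _ Hcol)).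
    + destruct (F1H _ _ _ Ha0 Hb0 Hab) as [m [Hm Hs]].
      exact (MK _ _ _ _ _ Hs (F3 _ _ _ Ha0 Hc0) (Hlt _ Hm) Hcol).
    + apply col_trans in Hcol. apply (IH _ _ _ Ha0 Hb0 Hc0); auto; intros ->; auto.
Qed.

Lemma w_formula t i : 2 * fst (w t i) = 6 * Z.of_nat t * Z.of_nat i - 3 * Z.of_nat i * (Z.of_nat i - 1)
  /\ 2 * snd (w t i) = -3 * Z.of_nat i * (Z.of_nat i - 1).
Proof.
  induction i as [|i IH]; [simpl; lia|].
  simpl w. unfold padd, v; cbn [fst snd]. rewrite Nat2Z.inj_succ. lia.
Qed.

Lemma prod_le x y A B : Z.abs x <= A -> Z.abs y <= B -> x * y <= A * B.
Proof. intros. nia. Qed.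

Lemma core3 T K M I J L wxi wyi wxj wyj wxl wyl ax ay bx by' cx cy :
  1 <= T -> 0 < K -> M = (T+1)*K -> 0 <= I < J -> J < L -> L <= T-2 ->
  2*wxi = 6*T*I - 3*I*(I-1) -> 2*wyi = -3*I*(I-1) ->
  2*wxj = 6*T*J - 3*J*(J-1) -> 2*wyj = -3*J*(J-1) ->
  2*wxl = 6*T*L - 3*L*(L-1) -> 2*wyl = -3*L*(L-1) ->
  0 <= ax <= K -> 0 <= ay <= M -> 0 <= bx <= K -> 0 <= by' <= M -> 0 <= cx <= K -> 0 <= cy <= M ->
  (bx + M*wxj - (ax + M*wxi)) * (cy + M*wyl - (ay + M*wyi))
  - (by' + M*wyj - (ay + M*wyi)) * (cx + M*wxl - (ax + M*wxi)) <> 0.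
Proof.
  intros HT HK HM HI HJ HL Hxi Hyi Hxj Hyj Hxl Hyl Ha1 Ha2 Hb1 Hb2 Hc1 Hc2.
  set (Ux := wxj - wxi). set (Uy := wyj - wyi). set (Vx := wxl - wxj). set (Vy := wyl - wyj).
  set (Px := bx - ax). set (Py := by' - ay). set (Qx := cx - bx). set (Qy := cy - by').
  assert (HUx : 2*Ux = 3*(J-I)*(2*T-I-J+1)) by (unfold Ux; lia).
  assert (HUy : 2*Uy = -3*(J-I)*(I+J-1)) by (unfold Uy; lia).
  assert (HVx : 2*Vx = 3*(L-J)*(2*T-J-L+1)) by (unfold Vx; lia).
  assert (HVy : 2*Vy = -3*(L-J)*(J+L-1)) by (unfold Vy; lia).
  assert (Hcr : 4*(Ux*Vy - Uy*Vx) = (2*Ux)*(2*Vy) - (2*Uy)*(2*Vx)) by ring.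
  rewrite HUx, HUy, HVx, HVy in Hcr.
  assert (Hcr2 : 2*(Ux*Vy - Uy*Vx) = -9*T*(J-I)*(L-J)*((J-I)+(L-J))) by (clear - Hcr; lia).
  assert (Ux0 : 0 <= Ux).
  { assert (0 <= (J-I)*(2*T-I-J+1)) by (apply Z.mul_nonneg_nonneg; lia). clear - HUx H; lia. }
  assert (Uy0 : Uy <= 0).
  { assert (0 <= (J-I)*(I+J-1)) by (apply Z.mul_nonneg_nonneg; lia). clear - HUy H; lia. }
  assert (Vx0 : 0 <= Vx).
  { assert (0 <= (L-J)*(2*T-J-L+1)) by (apply Z.mul_nonneg_nonneg; lia). clear - HVx H; lia. }
  assert (Vy0 : Vy <= 0).
  { assert (0 <= (L-J)*(J+L-1)) by (apply Z.mul_nonneg_nonneg; lia). clear - HVy H; lia. }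
  assert (HU : Ux - Uy = 3*T*(J-I)) by (clear - HUx HUy; lia).
  assert (HV : Vx - Vy = 3*T*(L-J)) by (clear - HVx HVy; lia).
  assert (KM : K <= M) by (subst M; assert (0 <= T*K) by (apply Z.mul_nonneg_nonneg; lia); lia).
  assert (T1 : Ux*Qy - Uy*Qx <= (Ux - Uy)*M).
  { assert (Ux*Qy <= Ux*M) by (apply Z.mul_le_mono_nonneg_l; unfold Qy; lia).
    assert ((-Uy)*Qx <= (-Uy)*M) by (apply Z.mul_le_mono_nonneg_l; unfold Qx; lia). lia. }
  assert (T2 : Px*Vy - Py*Vx <= (Vx - Vy)*M).
  { assert ((-Vy)*(-Px) <= (-Vy)*M) by (apply Z.mul_le_mono_nonneg_l; unfold Px; lia).
    assert (Vx*(-Py) <= Vx*M) by (apply Z.mul_le_mono_nonneg_l; unfold Py; lia). lia. }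
  assert (T3 : Px*Qy - Py*Qx <= 2*M*M).
  { assert (Px*Qy <= M*M) by (apply prod_le; unfold Px, Qy; lia).
    assert ((-Py)*Qx <= M*M) by (apply prod_le; unfold Py, Qx; lia). lia. }
  set (a := J - I) in *. set (b := L - J) in *.
  assert (Hcr3 : Ux*Vy - Uy*Vx <= -9*T*a*b).
  { assert (0 <= T*a*b*(a+b-2)) by (clear - HT HI HJ; unfold a, b; repeat apply Z.mul_nonneg_nonneg; lia). clear - Hcr2 H; lia. }
  assert (Hneg : -9*T*a*b + 3*T*(a+b) + 2 <= -1).
  { assert (2*2 <= (3*a-1)*(3*b-1)) by (clear - HI HJ; unfold a, b; apply Z.mul_le_mono_nonneg; lia).
    assert (0 <= T*((3*a-1)*(3*b-1)-4)) by (apply Z.mul_nonneg_nonneg; lia). clear - H H0 HT; lia. }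
  assert (Hid : (bx + M*wxj - (ax + M*wxi)) * (cy + M*wyl - (ay + M*wyi))
    - (by' + M*wyj - (ay + M*wyi)) * (cx + M*wxl - (ax + M*wxi))
    = M*M*(Ux*Vy - Uy*Vx) + M*((Ux*Qy - Uy*Qx) + (Px*Vy - Py*Vx)) + (Px*Qy - Py*Qx)).
  { unfold Ux, Uy, Vx, Vy, Px, Py, Qx, Qy. ring. }
  rewrite Hid.
  assert (M > 0) by lia.
  assert (MM : 0 <= M*M) by (apply Z.mul_nonneg_nonneg; lia).
  assert (E1 : M*M*(Ux*Vy - Uy*Vx) <= M*M*(-9*T*a*b)) by (apply Z.mul_le_mono_nonneg_l; lia).
  assert (E2 : M*((Ux*Qy - Uy*Qx) + (Px*Vy - Py*Vx)) <= M*(3*T*(a+b)*M)).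
  { apply Z.mul_le_mono_nonneg_l; [lia|]. rewrite HU in T1. rewrite HV in T2. lia. }
  assert (E3 : M*M*(-9*T*a*b + 3*T*(a+b) + 2) <= M*M*(-1)) by (apply Z.mul_le_mono_nonneg_l; lia).
  assert (HMM : 0 < M*M) by (apply Z.mul_pos_pos; lia).
  clearbody Ux Uy Vx Vy Px Py Qx Qy a b.
  clear - E1 E2 E3 T3 HMM. lia.
Qed.

Lemma cross_sign m dx dy zx zy M : slope_in m dx dy -> 1 <= m -> 0 < M ->
  ((M <= zx /\ zy <= M) \/ (zx <= -M /\ -M <= zy)) -> dx*zy - dy*zx <> 0.
Proof.
  unfold slope_in. intros Hs Hm HM Hz.
  destruct Hs as [(H1&H2&H3)|(H1&H2&H3)].
  - assert (dx <= m*dx) by nia. destruct Hz as [[Z1 Z2]|[Z1 Z2]].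
    + assert (dx*zy <= dx*M) by nia. assert (dy*zx > dx*zx) by nia. assert (dx*zx >= dx*M) by nia. lia.
    + assert (dx*zy >= -dx*M) by nia. assert (dy*zx < dx*zx) by nia. assert (dx*zx <= -dx*M) by nia. lia.
  - assert (dx >= m*dx) by nia. destruct Hz as [[Z1 Z2]|[Z1 Z2]].
    + assert (dx*zy >= dx*M) by nia. assert (dy*zx < dx*zx) by nia. assert (dx*zx <= dx*M) by nia. lia.
    + assert (dx*zy <= -dx*M) by nia. assert (dy*zx > dx*zx) by nia. assert (dx*zx >= -dx*M) by nia. lia.
Qed.

Lemma wdiff T I J wxi wxj wyi wyj : 0 <= I < J -> J <= T - 2 ->
  2*wxi = 6*T*I - 3*I*(I-1) -> 2*wyi = -3*I*(I-1) ->
  2*wxj = 6*T*J - 3*J*(J-1) -> 2*wyj = -3*J*(J-1) ->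
  2 <= wxj - wxi /\ wyj - wyi <= 0.
Proof.
  intros HI HJ H1 H2 H3 H4.
  assert (HUx : 2*(wxj - wxi) = 3*(J-I)*(2*T-I-J+1)) by lia.
  assert (HUy : 2*(wyj - wyi) = -3*(J-I)*(I+J-1)) by lia.
  assert (6 <= (J-I)*(2*T-I-J+1)).
  { assert (1*6 <= (J-I)*(2*T-I-J+1)) by (apply Z.mul_le_mono_nonneg; lia). lia. }
  assert (0 <= (J-I)*(I+J-1)) by (apply Z.mul_nonneg_nonneg; lia).
  lia.
Qed.

Lemma core2 T K M I J wxi wyi wxj wyj ax ay bx by' cx cy m :
  1 <= T -> 0 < K -> M = (T+1)*K -> 0 <= I -> 0 <= J -> I <> J -> I <= T-2 -> J <= T-2 ->
  2*wxi = 6*T*I - 3*I*(I-1) -> 2*wyi = -3*I*(I-1) ->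
  2*wxj = 6*T*J - 3*J*(J-1) -> 2*wyj = -3*J*(J-1) ->
  0 <= ax <= K -> 0 <= ay <= M -> 0 <= cx <= K -> 0 <= cy <= M ->
  slope_in m (bx - ax) (by' - ay) -> 1 <= m ->
  (bx + M*wxi - (ax + M*wxi)) * (cy + M*wyj - (ay + M*wyi))
  - (by' + M*wyi - (ay + M*wyi)) * (cx + M*wxj - (ax + M*wxi)) <> 0.
Proof.
  intros HT HK HM HI HJ HIJ HI2 HJ2 H1 H2 H3 H4 Ha1 Ha2 Hc1 Hc2 Hs Hm.
  replace (bx + M*wxi - (ax + M*wxi)) with (bx - ax) by ring.
  replace (by' + M*wyi - (ay + M*wyi)) with (by' - ay) by ring.
  assert (KM : K <= M) by (subst M; assert (0 <= T*K) by (apply Z.mul_nonneg_nonneg; lia); lia).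
  apply (cross_sign m _ _ _ _ M Hs Hm); [lia|].
  destruct (Z_lt_le_dec I J) as [Hlt|Hgt].
  - destruct (wdiff T I J wxi wxj wyi wyj) as [W1 W2]; try lia.
    left.
    assert (M*2 <= M*(wxj - wxi)) by (apply Z.mul_le_mono_nonneg_l; lia).
    assert (M*(wyj - wyi) <= M*0) by (apply Z.mul_le_mono_nonneg_l; lia).
    lia.
  - destruct (wdiff T J I wxj wxi wyj wyi) as [W1 W2]; try lia.
    right.
    assert (M*2 <= M*(wxi - wxj)) by (apply Z.mul_le_mono_nonneg_l; lia).
    assert (M*(wyi - wyj) <= M*0) by (apply Z.mul_le_mono_nonneg_l; lia).
    lia.
Qed.

Lemma St_piece t x : (2 <= t)%nat -> St t x ->
  exists i p, (i <= t - 2)%nat /\ Sub (S t) p /\ x = padd p (q t i).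
Proof.
  intros Ht [i [Hi [p [Hp ->]]]]. exists i, p. split; [exact Hi|]. split; [|reflexivity].
  apply Skl_Sub in Hp. replace (t - i + (i + 2) - 1)%nat with (S t) in Hp by lia. exact Hp.
Qed.

Lemma Subt_bounds t p : Sub (S t) p ->
  0 <= fst p <= 4 ^ (Z.of_nat t + 1) /\ 0 <= snd p <= (Z.of_nat t + 1) * 4 ^ (Z.of_nat t + 1).
Proof.
  intros H. apply Sub_bounds in H. rewrite Nat2Z.inj_succ in H.
  replace (Z.succ (Z.of_nat t)) with (Z.of_nat t + 1) in H by lia. lia.
Qed.

Lemma two_same t i j pa pb pc : (2 <= t)%nat -> (i <= t-2)%nat -> (j <= t-2)%nat -> i <> j ->
  Sub (S t) pa -> Sub (S t) pb -> Sub (S t) pc -> pa <> pb ->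
  ~ collinear (padd pa (q t i)) (padd pb (q t i)) (padd pc (q t j)).
Proof.
  intros Ht Hi Hj Hij Ha Hb Hc Hab.
  destruct (F1 _ _ _ Ha Hb Hab) as [m [Hm Hs]].
  pose proof (Subt_bounds _ _ Ha) as Ba. pose proof (Subt_bounds _ _ Hc) as Bc.
  destruct (w_formula t i) as [Wxi Wyi]. destruct (w_formula t j) as [Wxj Wyj].
  pose proof (pow4_pos (S t)) as HK. rewrite Nat2Z.inj_succ in HK.
  replace (Z.succ (Z.of_nat t)) with (Z.of_nat t + 1) in HK by lia.
  unfold collinear, padd, q; cbn [fst snd].
  apply (core2 (Z.of_nat t) (4 ^ (Z.of_nat t + 1)) _ (Z.of_nat i) (Z.of_nat j) _ _ _ _ _ _ _ _ _ _ m);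
    try lia; auto.
Qed.

Lemma all_diff t i j l pa pb pc : (2 <= t)%nat -> (i < j)%nat -> (j < l)%nat -> (l <= t-2)%nat ->
  Sub (S t) pa -> Sub (S t) pb -> Sub (S t) pc ->
  ~ collinear (padd pa (q t i)) (padd pb (q t j)) (padd pc (q t l)).
Proof.
  intros Ht Hij Hjl Hl Ha Hb Hc.
  pose proof (Subt_bounds _ _ Ha) as Ba. pose proof (Subt_bounds _ _ Hb) as Bb.
  pose proof (Subt_bounds _ _ Hc) as Bc.
  destruct (w_formula t i) as [Wxi Wyi]. destruct (w_formula t j) as [Wxj Wyj].
  destruct (w_formula t l) as [Wxl Wyl].
  pose proof (pow4_pos (S t)) as HK. rewrite Nat2Z.inj_succ in HK.
  replace (Z.succ (Z.of_nat t)) with (Z.of_nat t + 1) in HK by lia.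
  unfold collinear, padd, q; cbn [fst snd].
  apply (core3 (Z.of_nat t) (4 ^ (Z.of_nat t + 1)) _ (Z.of_nat i) (Z.of_nat j) (Z.of_nat l));
    try lia; auto.
Qed.

Lemma all_same t i pa pb pc :
  Sub (S t) pa -> Sub (S t) pb -> Sub (S t) pc ->
  padd pa (q t i) <> padd pb (q t i) -> padd pa (q t i) <> padd pc (q t i) ->
  padd pb (q t i) <> padd pc (q t i) ->
  ~ collinear (padd pa (q t i)) (padd pb (q t i)) (padd pc (q t i)).
Proof.
  intros Ha Hb Hc H1 H2 H3 Hcol. apply col_trans in Hcol.
  apply (Sub_gp _ _ _ _ Ha Hb Hc); auto; intros ->; auto.
Qed.

Theorem proposition4 : forall t : nat, (2 <= t)%nat -> general_position (St t).
Proof.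
  intros t Ht a b c Ha Hb Hc Hab Hac Hbc Hcol.
  destruct (St_piece _ _ Ht Ha) as [i [pa [Hi [Hpa ->]]]].
  destruct (St_piece _ _ Ht Hb) as [j [pb [Hj [Hpb ->]]]].
  destruct (St_piece _ _ Ht Hc) as [l [pc [Hl [Hpc ->]]]].
  assert (Hne : forall p p' k, padd p (q t k) <> padd p' (q t k) -> p <> p')
    by (intros p p' k H E; subst; auto).
  destruct (Nat.eq_dec i j) as [Eij|Hij]; destruct (Nat.eq_dec i l) as [Eil|Hil];
    destruct (Nat.eq_dec j l) as [Ejl|Hjl]; try (exfalso; lia).
  - subst j l. exact (all_same _ _ _ _ _ Hpa Hpb Hpc Hab Hac Hbc Hcol).
  - subst j. exact (two_same t i l pa pb pc Ht Hi Hl Hil Hpa Hpb Hpc (Hne _ _ _ Hab) Hcol).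
  - subst l. exact (two_same t i j pa pc pb Ht Hi Hj Hij Hpa Hpc Hpb (Hne _ _ _ Hac) (col_23 _ _ _ Hcol)).
  - subst l. exact (two_same t j i pb pc pa Ht Hj Hi (fun E => Hij (eq_sym E)) Hpb Hpc Hpa (Hne _ _ _ Hbc)
      (col_23 _ _ _ (col_12 _ _ _ Hcol))).
  -
    destruct (Nat.lt_total i j) as [Hij'|[Hij'|Hij']]; [|lia|];
    destruct (Nat.lt_total j l) as [Hjl'|[Hjl'|Hjl']]; try lia;
    destruct (Nat.lt_total i l) as [Hil'|[Hil'|Hil']]; try lia.
    + exact (all_diff t i j l pa pb pc Ht Hij' Hjl' Hl Hpa Hpb Hpc Hcol).
    + exact (all_diff t i l j pa pc pb Ht Hil' Hjl' Hj Hpa Hpc Hpb (col_23 _ _ _ Hcol)).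
    + exact (all_diff t l i j pc pa pb Ht Hil' Hij' Hj Hpc Hpa Hpb
        (col_12 _ _ _ (col_23 _ _ _ Hcol))).
    + exact (all_diff t j i l pb pa pc Ht Hij' Hil' Hl Hpb Hpa Hpc (col_12 _ _ _ Hcol)).
    + exact (all_diff t j l i pb pc pa Ht Hjl' Hil' Hi Hpb Hpc Hpa
        (col_23 _ _ _ (col_12 _ _ _ Hcol))).
    + exact (all_diff t l j i pc pb pa Ht Hjl' Hij' Hi Hpc Hpb Hpa
        (col_12 _ _ _ (col_23 _ _ _ (col_12 _ _ _ Hcol)))).
Qed.
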